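(* Let $\varphi:=\frac{16}{3}\mathbb{1}-2\sqrt5 f_{24}:\mathbb{Z}/24\mathbb{Z}\to\mathbb{R}$. For every $a:\mathbb{Z}/24\mathbb{Z}\to[0,\infty)$, $$\big\|(a*\varphi)_+\big\|_2\le 2\|a\|_2 .$$
   Context: $\mathbb{1}$ is the constant function $1$ on $\mathbb{Z}/24\mathbb{Z}$; $f_{24}(t):=\#\{j\in\mathbb{Z}/24\mathbb{Z}:j^2\equiv t\ (\mathrm{mod}\ 24)\}$; $(a*\varphi)(t):=\frac1{24}\sum_{j\in\mathbb{Z}/24\mathbb{Z}}a(j)\varphi(t-j)$; $x_+:=\max(x,0)$ applied pointwise; $\|h\|_2:=(\sum_{t\in\mathbb{Z}/24\mathbb{Z}}|h(t)|^2)^{1/2}$. *)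

(* Defs.v *)
From mathcomp Require Import all_boot all_order all_algebra.
From mathcomp Require Import reals.
Set Implicit Arguments. Unset Strict Implicit. Unset Printing Implicit Defensive.
Import Order.TTheory GRing.Theory Num.Theory.
Local Open Scope ring_scope.

Section Defs.
Variable R : realType.

Definition f24 (t : 'Z_24) : R := (#|[set j : 'Z_24 | j * j == t]|)%:R.

Definition phi24 (t : 'Z_24) : R := 16%:R / 3%:R - 2%:R * Num.sqrt 5%:R * f24 t.

Definition conv24 (a b : 'Z_24 -> R) (t : 'Z_24) : R :=
  24%:R^-1 * \sum_(j : 'Z_24) a j * b (t - j).

Definition posp24 (h : 'Z_24 -> R) (t : 'Z_24) : R := Num.max (h t) 0.

Definition norm2_24 (h : 'Z_24 -> R) : R := Num.sqrt (\sum_(t : 'Z_24) (h t) ^+ 2).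
End Defs.

(* Main.v *)
Require Import Defs.
From mathcomp Require Import all_boot all_order all_algebra.
From mathcomp Require Import reals ring lra.
Import Order.TTheory GRing.Theory Num.Theory.
Local Open Scope ring_scope.

Definition pos {R : realType} (x : R) := Num.max x 0.
Lemma pos_ge {R : realType} (x : R) : 0 <= x -> pos x = x.
Proof. by move=> h; rewrite /pos maxEge h. Qed.
Lemma pos_lt {R : realType} (x : R) : x < 0 -> pos x = 0.
Proof. by move=> h; rewrite /pos maxEge leNgt h. Qed.
Ltac casepos x := let h := fresh "hp" in
  have [h|h] := lerP 0 x; [rewrite (pos_ge _ h) | rewrite (pos_lt _ h)].

Lemma zaddE (t m n : 'Z_24) (k : nat) : nat_of_ord (m + n) = k -> t + m + n = t + k%:R.
Proof. by move=> h; rewrite -addrA -h natr_Zp. Qed.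
Lemma zaddE0 (t m n : 'Z_24) : nat_of_ord (m + n) = 0%N -> t + m + n = t.
Proof. by move=> h; rewrite (@zaddE t m n 0 h) mulr0n addr0. Qed.
Lemma zsubE (t m : 'Z_24) (k : nat) : nat_of_ord (- m) = k -> t - m = t + k%:R.
Proof. by move=> h; rewrite -h natr_Zp. Qed.
Lemma zsubE0 (t m : 'Z_24) : nat_of_ord (- m) = 0%N -> t - m = t.
Proof. by move=> h; rewrite (@zsubE t m 0 h) mulr0n addr0. Qed.

Ltac znorm a := repeat match goal with
 | |- context [ a (?t + ?m + ?n) ] =>
   let k := eval vm_compute in (nat_of_ord (m + n : 'Z_24)) in
   match k with
   | O => rewrite (@zaddE0 t m n erefl)
   | S _ => rewrite (@zaddE t m n k erefl)
   end
 | |- context [ a (?t - ?m) ] =>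
   let k := eval vm_compute in (nat_of_ord (- m : 'Z_24)) in
   match k with
   | O => rewrite (@zsubE0 t m erefl)
   | S _ => rewrite (@zsubE t m k erefl)
   end
 end.

Lemma sumsh {R : realType} (F : 'Z_24 -> R) (k : 'Z_24) : \sum_t F (t + k) = \sum_t F t.
Proof. by rewrite [RHS](reindex_inj (addIr k)). Qed.

Lemma sumZ {R : realType} (F : 'Z_24 -> R) : \sum_t F t = \sum_(0 <= i < 24) F (i%:R).
Proof.
rewrite big_mkord; apply: eq_bigr => i _; congr F; apply: val_inj.
by rewrite /= val_Zp_nat // modn_small.
Qed.

Lemma sumE {R : realType} (F : 'Z_24 -> R) : \sum_t F t = F 0%:R + F 1%:R + F 2%:R + F 3%:R + F 4%:R + F 5%:R + F 6%:R + F 7%:R + F 8%:R + F 9%:R + F 10%:R + F 11%:R + F 12%:R + F 13%:R + F 14%:R + F 15%:R + F 16%:R + F 17%:R + F 18%:R + F 19%:R + F 20%:R + F 21%:R + F 22%:R + F 23%:R.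
Proof. by rewrite sumZ /index_iota /= !big_cons big_nil !addrA addr0. Qed.

Lemma sum_ind {R : realType} (F : 'Z_24 -> R) (c : 'Z_24) : \sum_j F j * ((j == c)%:R) = F c.
Proof.
rewrite (bigD1 c) //= big1 => [|j /negbTE ->]; last by rewrite mulr0.
by rewrite eqxx addr0 mulr_natr /= mulr1n.
Qed.

Lemma f24_sum {R : realType} (s : 'Z_24) : f24 R s = \sum_u ((u * u == s)%:R : R).
Proof. rewrite /f24 cardsE -sum1_card natr_sum big_mkcond; apply: eq_bigr => u _; rewrite unfold_in -[eqn _ _]/(u * u == s); by case: (u * u == s). Qed.

Definition Sa {R : realType} (a : 'Z_24 -> R) := \sum_j a j.

Lemma conv_formula {R : realType} (a : 'Z_24 -> R) (t : 'Z_24) :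
  conv24 a (@phi24 R) t = 2 / 9 * Sa a - Num.sqrt 5%:R / 12 *
   (2 * a t + 8 * a (t + 23) + 4 * a (t + 20) + 4 * a (t + 15) + 2 * a (t + 12) + 4 * a (t + 8)).
Proof.
have e1 : \sum_j a j * f24 R (t - j) = \sum_u a (t - u * u).
  under eq_bigr => j _ do rewrite f24_sum mulr_sumr.
  rewrite exchange_big /=; apply: eq_bigr => u _.
  rewrite -(sum_ind a (t - u * u)); apply: eq_bigr => j _; congr (_ * _%:R).
  congr nat_of_bool.
  by apply/idP/idP => /eqP h; apply/eqP; rewrite h opprB addrC subrK.
rewrite /conv24 /phi24.
under eq_bigr => j _ do rewrite mulrBr.
have e2 : \sum_j a j * (2 * Num.sqrt 5%:R * f24 R (t - j)) =
   2 * Num.sqrt 5%:R * \sum_j a j * f24 R (t - j).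
  by rewrite mulr_sumr; apply: eq_bigr => j _; rewrite mulrCA.
rewrite big_split /= sumrN -mulr_suml e2 e1 (sumE (fun u => a (t - u * u))) /=; znorm a; rewrite /Sa.
by field.
Qed.

Lemma L1u {R : realType} (u v : R) :
  pos u ^+ 2 + pos v ^+ 2 <= (u - v) ^+ 2 / 2 + 2 * pos ((u + v) / 2) ^+ 2.
Proof.
have := sqr_ge0 (u - v).
casepos u; casepos v; casepos ((u + v) / 2); nra.
Qed.

Definition Af {R : realType} (M G : R) : R :=
  if 2 * M <= G then - (G ^+ 2) / 4 else if M <= G then 3 * M ^+ 2 - 2 * M * G else (2 * M - G) ^+ 2.

Lemma L4c {R : realType} (g0 g1 g2 g3 M : R) : 0 <= g0 -> 0 <= g1 -> 0 <= g2 -> 0 <= g3 ->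
 M <= g0 + g1 + g2 + g3 -> 0 <= M - g0 - g1 -> 0 <= M - g1 - g2 -> 0 <= M - g2 - g3 -> 0 <= M - g3 - g0 ->
 g2 <= g0 -> g3 <= g1 ->
 (M - g0 - g1) ^+ 2 + (M - g1 - g2) ^+ 2 + (M - g2 - g3) ^+ 2 + (M - g3 - g0) ^+ 2 <=
 g0 ^+ 2 + g1 ^+ 2 + g2 ^+ 2 + g3 ^+ 2 + (3 * M ^+ 2 - 2 * M * (g0 + g1 + g2 + g3)).
Proof. move=> *. have := sqr_ge0 (g2 - g3). nra. Qed.
Lemma L4 {R : realType} (g0 g1 g2 g3 M : R) : 0 <= g0 -> 0 <= g1 -> 0 <= g2 -> 0 <= g3 -> 0 <= M ->
  pos (M - g0 - g1) ^+ 2 + pos (M - g1 - g2) ^+ 2 + pos (M - g2 - g3) ^+ 2 + pos (M - g3 - g0) ^+ 2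
  <= g0 ^+ 2 + g1 ^+ 2 + g2 ^+ 2 + g3 ^+ 2 + Af M (g0 + g1 + g2 + g3).
Proof.
move=> h0 h1 h2 h3 hM; rewrite /Af.
have := sqr_ge0 (g0 - g1 + g2 - g3); have := sqr_ge0 (g0 + g1 - g2 - g3); have := sqr_ge0 (g1 + g2 - g3 - g0).
case: ifP => [hA1|/negbT hA1]; [| move: hA1; rewrite -ltNge => hA1;
  case: ifP => [hA2|/negbT hA2]; [| move: hA2; rewrite -ltNge => hA2]];
casepos (M - g0 - g1); casepos (M - g1 - g2); casepos (M - g2 - g3); casepos (M - g3 - g0); try nra;
  move=> _ _ _; try (first [ have := sqr_ge0 (M - g1 - g3); nra | have := sqr_ge0 (M - g0 - g2); nra
   | have := sqr_ge0 (g0 - g1); nra | have := sqr_ge0 (g1 - g2); nra | have := sqr_ge0 (g2 - g3); nra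
   | have := sqr_ge0 (g3 - g0); nra]).
have [hg02|hg02] := lerP g2 g0; have [hg13|hg13] := lerP g3 g1.
- have := @L4c _ g0 g1 g2 g3 M h0 h1 h2 h3 ltac:(lra) ltac:(lra) ltac:(lra) ltac:(lra) ltac:(lra) ltac:(lra) ltac:(lra); lra.
- have := @L4c _ g0 g3 g2 g1 M h0 h3 h2 h1 ltac:(lra) ltac:(lra) ltac:(lra) ltac:(lra) ltac:(lra) ltac:(lra) ltac:(lra); lra.
- have := @L4c _ g2 g1 g0 g3 M h2 h1 h0 h3 ltac:(lra) ltac:(lra) ltac:(lra) ltac:(lra) ltac:(lra) ltac:(lra) ltac:(lra); lra.
- have := @L4c _ g2 g3 g0 g1 M h2 h3 h0 h1 ltac:(lra) ltac:(lra) ltac:(lra) ltac:(lra) ltac:(lra) ltac:(lra) ltac:(lra); lra.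
Qed.
Lemma L3 {R : realType} (s0 s1 s2 : R) : 0 <= s0 -> 0 <= s1 -> 0 <= s2 ->
  Af (2 / 9 * (s0 + s1 + s2)) ((s0 + 2 * s2) / 3) + Af (2 / 9 * (s0 + s1 + s2)) ((s1 + 2 * s0) / 3)
  + Af (2 / 9 * (s0 + s1 + s2)) ((s2 + 2 * s1) / 3)
  <= ((s0 - s2) ^+ 2 + (s1 - s0) ^+ 2 + (s2 - s1) ^+ 2) / 18.
Proof.
move=> h0 h1 h2; rewrite /Af.
have := sqr_ge0 (s0 - s1); have := sqr_ge0 (s1 - s2); have := sqr_ge0 (s2 - s0).
do 3! (case: ifP => [?|/negbT]; [| rewrite -ltNge => ?; case: ifP => [?|/negbT]; [| rewrite -ltNge => ?]]).
all: nra.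
Qed.

Definition h2 {R : realType} (a : 'Z_24 -> R) t := 2 / 9 * Sa a - (a t + a (t + 12)) / 3
  - 2 / 3 * (a (t + 20) + a (t + 8)) - 2 / 3 * a (t + 15) - 4 / 3 * a (t + 23).
Definition Pd {R : realType} (a : 'Z_24 -> R) t :=
  (a (t + 15) - a (t + 3) + 2 * (a (t + 23) - a (t + 11))) / 3.
Definition Rr {R : realType} (a : 'Z_24 -> R) t := 2 / 9 * Sa a -
  (a t + a (t + 12) + 2 * a (t + 20) + 2 * a (t + 8) + a (t + 15) + a (t + 3) + 2 * a (t + 23) + 2 * a (t + 11)) / 3.

Lemma stepA {R : realType} (a : 'Z_24 -> R) t :
  pos (h2 a t) ^+ 2 + pos (h2 a (t + 12)) ^+ 2 <= 2 * Pd a t ^+ 2 + 2 * pos (Rr a t) ^+ 2.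
Proof.
have e1 : (h2 a t + h2 a (t + 12)) / 2 = Rr a t by rewrite /h2 /Rr; znorm a; lra.
have e2 : h2 a t - h2 a (t + 12) = - (2 * Pd a t) by rewrite /h2 /Pd; znorm a; lra.
have := L1u (h2 a t) (h2 a (t + 12)); rewrite e1 e2 sqrrN.
set p := Pd a t; set q := pos (Rr a t); nra.
Qed.

Lemma chainA {R : realType} (a : 'Z_24 -> R) :
  \sum_t pos (h2 a t) ^+ 2 <= \sum_t Pd a t ^+ 2 + \sum_t pos (Rr a t) ^+ 2.
Proof.
have H : \sum_t (pos (h2 a t) ^+ 2 + pos (h2 a (t + 12)) ^+ 2)
   <= \sum_t (2 * Pd a t ^+ 2 + 2 * pos (Rr a t) ^+ 2).
  by apply: ler_sum => t _; exact: stepA.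
move: H; rewrite !big_split /= (sumsh (fun t => pos (h2 a t) ^+ 2) 12) -!mulr_sumr.
lra.
Qed.

Lemma chainB {R : realType} (a : 'Z_24 -> R) :
  \sum_t Pd a t ^+ 2 <= \sum_t (a t - a (t + 12)) ^+ 2.
Proof.
have H : \sum_t Pd a t ^+ 2 <= \sum_t (((a (t + 15) - a (t + 3)) ^+ 2 + 2 * (a (t + 23) - a (t + 11)) ^+ 2) / 3).
  apply: ler_sum => t _; rewrite /Pd.
  set p := a (t + 15) - a (t + 3); set q := a (t + 23) - a (t + 11).
  have := sqr_ge0 (p - q); nra.
apply: (le_trans H); rewrite -mulr_suml big_split /= -mulr_sumr.
have e1 : \sum_t (a (t + 15) - a (t + 3)) ^+ 2 = \sum_t (a t - a (t + 12)) ^+ 2.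
  rewrite -(sumsh (fun t => (a t - a (t + 12)) ^+ 2) 15); apply: eq_bigr => t _ /=; znorm a; done.
have e2 : \sum_t (a (t + 23) - a (t + 11)) ^+ 2 = \sum_t (a t - a (t + 12)) ^+ 2.
  rewrite -(sumsh (fun t => (a t - a (t + 12)) ^+ 2) 23); apply: eq_bigr => t _ /=; znorm a; done.
rewrite e1 e2; lra.
Qed.

Lemma budget {R : realType} (a : 'Z_24 -> R) :
  \sum_t (a t + a (t + 12)) ^+ 2 + \sum_t (a t - a (t + 12)) ^+ 2 = 4 * \sum_t a t ^+ 2.
Proof.
rewrite -big_split /=.
have -> : \sum_t ((a t + a (t + 12)) ^+ 2 + (a t - a (t + 12)) ^+ 2) = \sum_t (2 * a t ^+ 2 + 2 * a (t + 12) ^+ 2).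
  by apply: eq_bigr => t _; ring.
rewrite big_split /= (sumsh (fun t => 2 * a t ^+ 2) 12) -mulr_sumr; ring.
Qed.

Definition gg {R : realType} (a : 'Z_24 -> R) u := a u + a (u + 12) + 2 * a (u + 20) + 2 * a (u + 8).
Definition Gq {R : realType} (a : 'Z_24 -> R) t :=
  gg a t / 3 + gg a (t + 15) / 3 + gg a (t + 6) / 3 + gg a (t + 21) / 3.
Definition ss {R : realType} (a : 'Z_24 -> R) u :=
  a u + a (u + 12) + a (u + 15) + a (u + 3) + a (u + 6) + a (u + 18) + a (u + 21) + a (u + 9).
Definition dd {R : realType} (a : 'Z_24 -> R) u := a u + a (u + 12) - a (u + 20) - a (u + 8).

Lemma Sa_ge0 {R : realType} (a : 'Z_24 -> R) : (forall j, 0 <= a j) -> 0 <= Sa a.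
Proof. by move=> ha; apply: sumr_ge0 => j _. Qed.

Lemma gg_ge0 {R : realType} (a : 'Z_24 -> R) u : (forall j, 0 <= a j) -> 0 <= gg a u.
Proof. move=> ha; rewrite /gg; have := ha u; have := ha (u + 12); have := ha (u + 20); have := ha (u + 8); lra. Qed.

Lemma ss_ge0 {R : realType} (a : 'Z_24 -> R) u : (forall j, 0 <= a j) -> 0 <= ss a u.
Proof.
move=> ha; rewrite /ss; have := ha u; have := ha (u + 12); have := ha (u + 15); have := ha (u + 3);
have := ha (u + 6); have := ha (u + 18); have := ha (u + 21); have := ha (u + 9); lra.
Qed.

Lemma D1 {R : realType} (a : 'Z_24 -> R) (ha : forall j, 0 <= a j) t :
  pos (Rr a t) ^+ 2 + pos (Rr a (t + 15)) ^+ 2 + pos (Rr a (t + 6)) ^+ 2 + pos (Rr a (t + 21)) ^+ 2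
  <= (gg a t / 3) ^+ 2 + (gg a (t + 15) / 3) ^+ 2 + (gg a (t + 6) / 3) ^+ 2 + (gg a (t + 21) / 3) ^+ 2
     + Af (2 / 9 * Sa a) (Gq a t).
Proof.
have H := L4 (gg a t / 3) (gg a (t + 15) / 3) (gg a (t + 6) / 3) (gg a (t + 21) / 3) (2 / 9 * Sa a)
  ltac:(have := gg_ge0 a t ha; lra) ltac:(have := gg_ge0 a (t + 15) ha; lra)
  ltac:(have := gg_ge0 a (t + 6) ha; lra) ltac:(have := gg_ge0 a (t + 21) ha; lra)
  ltac:(have := Sa_ge0 a ha; lra).
have r1 : 2 / 9 * Sa a - gg a t / 3 - gg a (t + 15) / 3 = Rr a t by rewrite /gg /Rr; znorm a; lra.
have r2 : 2 / 9 * Sa a - gg a (t + 15) / 3 - gg a (t + 6) / 3 = Rr a (t + 15) by rewrite /gg /Rr; znorm a; lra.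
have r3 : 2 / 9 * Sa a - gg a (t + 6) / 3 - gg a (t + 21) / 3 = Rr a (t + 6) by rewrite /gg /Rr; znorm a; lra.
have r4 : 2 / 9 * Sa a - gg a (t + 21) / 3 - gg a t / 3 = Rr a (t + 21) by rewrite /gg /Rr; znorm a; lra.
by rewrite r1 r2 r3 r4 in H.
Qed.

Lemma D2 {R : realType} (a : 'Z_24 -> R) (ha : forall j, 0 <= a j) :
  4 * \sum_t pos (Rr a t) ^+ 2 <= 4 / 9 * \sum_t gg a t ^+ 2 + \sum_t Af (2 / 9 * Sa a) (Gq a t).
Proof.
have H : \sum_t (pos (Rr a t) ^+ 2 + pos (Rr a (t + 15)) ^+ 2 + pos (Rr a (t + 6)) ^+ 2 + pos (Rr a (t + 21)) ^+ 2)
  <= \sum_t ((gg a t / 3) ^+ 2 + (gg a (t + 15) / 3) ^+ 2 + (gg a (t + 6) / 3) ^+ 2 + (gg a (t + 21) / 3) ^+ 2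
     + Af (2 / 9 * Sa a) (Gq a t)) by apply: ler_sum => t _; exact: D1.
move: H; rewrite !big_split /=.
rewrite (sumsh (fun t => pos (Rr a t) ^+ 2) 15) (sumsh (fun t => pos (Rr a t) ^+ 2) 6)
  (sumsh (fun t => pos (Rr a t) ^+ 2) 21).
rewrite (sumsh (fun t => (gg a t / 3) ^+ 2) 15) (sumsh (fun t => (gg a t / 3) ^+ 2) 6)
  (sumsh (fun t => (gg a t / 3) ^+ 2) 21).
have -> : \sum_t (gg a t / 3) ^+ 2 = 1 / 9 * \sum_t gg a t ^+ 2.
  by rewrite mulr_sumr; apply: eq_bigr => t _; field.
lra.
Qed.

Lemma Sa_ss {R : realType} (a : 'Z_24 -> R) t : Sa a = ss a t + ss a (t + 16) + ss a (t + 20).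
Proof.
rewrite /Sa (reindex_inj (addrI t)) (sumE (fun u => a (t + u))) /= /ss; znorm a.
rewrite mulr0n addr0; lra.
Qed.

Lemma D3 {R : realType} (a : 'Z_24 -> R) (ha : forall j, 0 <= a j) t :
  Af (2 / 9 * Sa a) (Gq a t) + Af (2 / 9 * Sa a) (Gq a (t + 16)) + Af (2 / 9 * Sa a) (Gq a (t + 20))
  <= ((ss a t - ss a (t + 20)) ^+ 2 + (ss a (t + 16) - ss a t) ^+ 2 + (ss a (t + 20) - ss a (t + 16)) ^+ 2) / 18.
Proof.
have H := @L3 _ (ss a t) (ss a (t + 16)) (ss a (t + 20)) (ss_ge0 a t ha) (ss_ge0 a (t + 16) ha) (ss_ge0 a (t + 20) ha).
have e1 : (ss a t + 2 * ss a (t + 20)) / 3 = Gq a t by rewrite /ss /Gq /gg; znorm a; lra.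
have e2 : (ss a (t + 16) + 2 * ss a t) / 3 = Gq a (t + 16) by rewrite /ss /Gq /gg; znorm a; lra.
have e3 : (ss a (t + 20) + 2 * ss a (t + 16)) / 3 = Gq a (t + 20) by rewrite /ss /Gq /gg; znorm a; lra.
by rewrite e1 e2 e3 -(Sa_ss a t) in H.
Qed.

Lemma D4 {R : realType} (a : 'Z_24 -> R) (ha : forall j, 0 <= a j) :
  \sum_t Af (2 / 9 * Sa a) (Gq a t) <= 1 / 18 * \sum_t (ss a t - ss a (t + 20)) ^+ 2.
Proof.
have H : \sum_t (Af (2 / 9 * Sa a) (Gq a t) + Af (2 / 9 * Sa a) (Gq a (t + 16)) + Af (2 / 9 * Sa a) (Gq a (t + 20)))
  <= \sum_t (((ss a t - ss a (t + 20)) ^+ 2 + (ss a (t + 16) - ss a t) ^+ 2 + (ss a (t + 20) - ss a (t + 16)) ^+ 2) / 18)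
  by apply: ler_sum => t _; exact: D3.
move: H; rewrite -mulr_suml !big_split /=.
rewrite (sumsh (fun t => Af (2 / 9 * Sa a) (Gq a t)) 16) (sumsh (fun t => Af (2 / 9 * Sa a) (Gq a t)) 20).
have e1 : \sum_t (ss a (t + 16) - ss a t) ^+ 2 = \sum_t (ss a t - ss a (t + 20)) ^+ 2.
  rewrite -(sumsh (fun t => (ss a t - ss a (t + 20)) ^+ 2) 16); apply: eq_bigr => t _ /=.
  rewrite /ss; znorm a; congr (_ ^+ 2); lra.
have e2 : \sum_t (ss a (t + 20) - ss a (t + 16)) ^+ 2 = \sum_t (ss a t - ss a (t + 20)) ^+ 2.
  rewrite -(sumsh (fun t => (ss a t - ss a (t + 20)) ^+ 2) 20); apply: eq_bigr => t _ /=.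
  rewrite /ss; znorm a; congr (_ ^+ 2); lra.
rewrite e1 e2; lra.
Qed.

Lemma D5 {R : realType} (a : 'Z_24 -> R) :
  \sum_t (ss a t - ss a (t + 20)) ^+ 2 <= 16 * \sum_t dd a t ^+ 2.
Proof.
have H : \sum_t (ss a t - ss a (t + 20)) ^+ 2
   <= \sum_t (4 * (dd a t ^+ 2 + dd a (t + 15) ^+ 2 + dd a (t + 6) ^+ 2 + dd a (t + 21) ^+ 2)).
  apply: ler_sum => t _.
  have -> : ss a t - ss a (t + 20) = dd a t + dd a (t + 15) + dd a (t + 6) + dd a (t + 21)
    by rewrite /ss /dd; znorm a; lra.
  set p := dd a t; set q := dd a (t + 15); set r := dd a (t + 6); set s := dd a (t + 21).
  have := sqr_ge0 (p - q); have := sqr_ge0 (p - r); have := sqr_ge0 (p - s);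
  have := sqr_ge0 (q - r); have := sqr_ge0 (q - s); have := sqr_ge0 (r - s); nra.
apply: (le_trans H); rewrite -mulr_sumr !big_split /=.
rewrite (sumsh (fun t => dd a t ^+ 2) 15) (sumsh (fun t => dd a t ^+ 2) 6) (sumsh (fun t => dd a t ^+ 2) 21).
lra.
Qed.

Lemma D6 {R : realType} (a : 'Z_24 -> R) :
  \sum_t (a t + a (t + 12)) ^+ 2 = 1 / 9 * \sum_t gg a t ^+ 2 + 2 / 9 * \sum_t dd a t ^+ 2.
Proof.
have H : \sum_t (gg a t ^+ 2 + 2 * dd a t ^+ 2)
   = \sum_t (3 * (a t + a (t + 12)) ^+ 2 + 6 * (a (t + 20) + a (t + 8)) ^+ 2).
  by apply: eq_bigr => t _; rewrite /gg /dd; ring.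
have e : \sum_t (a (t + 20) + a (t + 8)) ^+ 2 = \sum_t (a t + a (t + 12)) ^+ 2.
  rewrite -(sumsh (fun t => (a t + a (t + 12)) ^+ 2) 20); apply: eq_bigr => t _ /=; znorm a; done.
move: H; rewrite !big_split /= -!mulr_sumr e; lra.
Qed.

Lemma chainD {R : realType} (a : 'Z_24 -> R) (ha : forall j, 0 <= a j) :
  \sum_t pos (Rr a t) ^+ 2 <= \sum_t (a t + a (t + 12)) ^+ 2.
Proof.
have := D2 a ha; have := D4 a ha; have := D5 a; have := D6 a; lra.
Qed.

Lemma main_sum {R : realType} (a : 'Z_24 -> R) (ha : forall j, 0 <= a j) :
  \sum_t pos (h2 a t) ^+ 2 <= 4 * \sum_t a t ^+ 2.
Proof.
have := chainA a; have := chainB a; have := chainD a ha; have := budget a; lra.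
Qed.

Lemma pointwise {R : realType} (a : 'Z_24 -> R) (ha : forall j, 0 <= a j) t :
  pos (conv24 a (@phi24 R) t) ^+ 2 <= pos (h2 a t) ^+ 2.
Proof.
have h5 : 2 <= Num.sqrt 5%:R :> R.
  have -> : (2 : R) = Num.sqrt (2 ^+ 2) by rewrite sqrtr_sqr ger0_norm.
  by rewrite ler_sqrt // ?ler0n //; lra.
have hF : 0 <= 2 * a t + 8 * a (t + 23) + 4 * a (t + 20) + 4 * a (t + 15) + 2 * a (t + 12) + 4 * a (t + 8).
  have := ha t; have := ha (t + 23); have := ha (t + 20); have := ha (t + 15); have := ha (t + 12);
  have := ha (t + 8); lra.
have hle : conv24 a (@phi24 R) t <= h2 a t.
  rewrite conv_formula /h2.
  set F := 2 * a t + 8 * a (t + 23) + 4 * a (t + 20) + 4 * a (t + 15) + 2 * a (t + 12) + 4 * a (t + 8) in hF *.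
  have : 0 <= (Num.sqrt 5%:R - 2) * F by apply: mulr_ge0 => //; lra.
  rewrite /F; lra.
casepos (conv24 a (@phi24 R) t); casepos (h2 a t); nra.
Qed.

Theorem mainTheorem15 (R : realType) (a : 'Z_24 -> R) (ha : forall j, 0 <= a j) :
  norm2_24 (posp24 (conv24 a (@phi24 R))) <= 2%:R * norm2_24 a.
Proof.
rewrite /norm2_24 /posp24.
have H : \sum_t Num.max (conv24 a (@phi24 R) t) 0 ^+ 2 <= 4 * \sum_t a t ^+ 2.
  apply: le_trans (main_sum a ha); apply: ler_sum => t _; exact: pointwise.
have -> : (2%:R : R) * Num.sqrt (\sum_t a t ^+ 2) = Num.sqrt (4 * \sum_t a t ^+ 2).
  rewrite sqrtrM ?ler0n //; congr (_ * _).
  have -> : (4 : R) = 2 ^+ 2 by rewrite expr2; lra.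
  by rewrite sqrtr_sqr ger0_norm.
rewrite ler_sqrt //; apply: mulr_ge0 => //; apply: sumr_ge0 => t _; exact: sqr_ge0.
Qed.
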